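(* Let $q=p^e$ with $p$ prime, let $a\in\mathbb{F}_q^*$, and let $f(x)=(x-a)^k\in\mathbb{F}_q[x]$ with $k\ge1$. Then every $f$-subgroup $M$ (in the multiplicative group of any extension field of $\mathbb{F}_q$) equals $\langle a\rangle$, and $M$ is standard: every $f$-sequence presenting $M$ is cyclic with $s_{n+1}=a s_n$ for all $n\in\mathbb{Z}$.
   Context: An $f$-sequence is a two-way infinite sequence $(s_n)_{n\in\mathbb{Z}}$ with $f(\sigma)s=0$, where $(\sigma s)_n=s_{n+1}$. A sequence $s$ presents a finite multiplicative subgroup $M$ if $s$ has smallest period $|M|$ and $M=\{s_0,\ldots,s_{|M|-1}\}$; $M$ is an $f$-subgroup if some $f$-sequence presents it. A sequence is cyclic if $s_{n+1}/s_n$ is a constant. An $f$-subgroup is standard if every $f$-sequence presenting it is cyclic. *)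

(* Defs.v *)
From HB Require Import structures.
From mathcomp Require Import all_boot all_order all_algebra all_field.
Set Implicit Arguments. Unset Strict Implicit. Unset Printing Implicit Defensive.
Import Order.TTheory GRing.Theory Num.Theory.
Local Open Scope ring_scope.

Section Seqs.
Variable L : fieldType.

(* (f(sigma) s)_n = sum_i f_i s_{n+i}, where (sigma s)_n = s_{n+1}. *)
Definition poly_shift_apply (f : {poly L}) (s : int -> L) : int -> L :=
  fun n => \sum_(i < size f) f`_i * s (n + (i%:Z))%R.

Definition is_f_seq (f : {poly L}) (s : int -> L) : Prop :=
  forall n : int, poly_shift_apply f s n = 0.

Definition is_period (s : int -> L) (m : nat) : Prop :=
  forall n : int, s (n + (m%:Z))%R = s n.

Definition finite_mult_subgroup (M : seq L) : Prop :=
  [/\ uniq M, (0 : L) \notin M, (1 : L) \in M,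
      {in M &, forall x y, x * y \in M} & {in M, forall x, x^-1 \in M}].

Definition presents (s : int -> L) (M : seq L) : Prop :=
  [/\ is_period s (size M),
      (forall m : nat, (0 < m)%N -> (m < size M)%N -> ~ is_period s m) &
      M =i [seq s (i%:Z) | i <- iota 0 (size M)]].

Definition f_subgroup (f : {poly L}) (M : seq L) : Prop :=
  finite_mult_subgroup M /\ exists s, is_f_seq f s /\ presents s M.

Definition cyclic_seq (s : int -> L) : Prop :=
  exists c : L, forall n : int, s (n + 1)%R = c * s n.

Definition standard_subgroup (f : {poly L}) (M : seq L) : Prop :=
  f_subgroup f M /\ forall s, is_f_seq f s -> presents s M -> cyclic_seq s.

(* the cyclic subgroup <a> of L^* generated by a (of finite order here) *)
Definition in_cyclic_gen (a x : L) : Prop := exists n : nat, x = a ^+ n.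

End Seqs.

(* Main.v *)
Require Import Defs.
From HB Require Import structures.
From mathcomp Require Import all_boot all_order all_algebra all_field.
From mathcomp Require Import ring zify.
Import GRing.Theory.
Local Open Scope ring_scope.


Section Aux.
Variable L : fieldType.

Definition Tsh (c : L) (s : int -> L) : int -> L := fun n => s (n + 1) - c * s n.

Lemma psa_ext (f : {poly L}) s n N : (size f <= N)%N ->
  poly_shift_apply f s n = \sum_(i < N) f`_i * s (n + i%:Z).
Proof.
move=> hN; rewrite /poly_shift_apply.
rewrite (big_ord_widen N (fun i => f`_i * s (n + i%:Z)) hN) big_mkcond /=.
apply: eq_bigr => i _; case: ifP => // /negbT; rewrite -leqNgt => h.
by rewrite nth_default // mul0r.
Qed.

Lemma psa_X (g : {poly L}) s n : poly_shift_apply ('X * g) s n = poly_shift_apply g s (n + 1).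
Proof.
rewrite (@psa_ext ('X * g) s n (size g).+1); last first.
  apply: leq_trans (size_polyMleq _ _) _; by rewrite size_polyX.
rewrite big_ord_recl coefXM eqxx mul0r add0r /poly_shift_apply.
apply: eq_bigr => i _; rewrite coefXM /=.
by rewrite intS addrA.
Qed.

Lemma psa_Z c (g : {poly L}) s n : poly_shift_apply (c *: g) s n = c * poly_shift_apply g s n.
Proof.
rewrite (@psa_ext (c *: g) s n (size g)); last exact: size_scale_leq.
rewrite /poly_shift_apply mulr_sumr; apply: eq_bigr => i _.
by rewrite coefZ mulrA.
Qed.

Lemma psa_B (g h : {poly L}) s n : poly_shift_apply (g - h) s n =
  poly_shift_apply g s n - poly_shift_apply h s n.
Proof.
have hs : (size (g - h)%R <= maxn (size g) (size h))%N.
  by apply: leq_trans (size_polyD _ _) _; rewrite size_polyN.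
rewrite (@psa_ext (g - h) s n _ hs) (@psa_ext g s n (maxn (size g) (size h))) ?leq_maxl //.
rewrite (@psa_ext h s n (maxn (size g) (size h))) ?leq_maxr //.
rewrite -sumrB; apply: eq_bigr => i _; by rewrite coefB mulrBl.
Qed.

Lemma psa_XsubC (c : L) (g : {poly L}) s n :
  poly_shift_apply (('X - c%:P) * g) s n = Tsh c (poly_shift_apply g s) n.
Proof.
by rewrite mulrBl mul_polyC psa_B psa_X psa_Z.
Qed.

Lemma psa_pow (c : L) k s n :
  poly_shift_apply (('X - c%:P) ^+ k) s n = iter k (Tsh c) s n.
Proof.
elim: k n => [|k IH] n.
  by rewrite expr0 /poly_shift_apply size_poly1 big_ord1 coef1 eqxx mul1r addr0.
by rewrite exprS psa_XsubC /= /Tsh !IH.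
Qed.

Lemma Tsh_period (c : L) u m : is_period u m -> is_period (Tsh c u) m.
Proof.
by move=> h n; rewrite /Tsh -addrA (addrC (m%:Z) 1) addrA !h.
Qed.

Lemma iter_period (c : L) u m j : is_period u m -> is_period (iter j (Tsh c) u) m.
Proof. by move=> h; elim: j => //= j IH; apply: Tsh_period. Qed.

Lemma geo (v : int -> L) (c : L) : (forall n, v (n + 1) = c * v n) ->
  forall i : nat, v i%:Z = c ^+ i * v 0.
Proof.
move=> hv; elim=> [|i IH]; first by rewrite expr0 mul1r.
by rewrite intS addrC hv IH exprS mulrA.
Qed.

Lemma zero_all (v : int -> L) (c : L) : c != 0 -> (forall n, v (n + 1) = c * v n) ->
  v 0 = 0 -> forall n, v n = 0.
Proof.
move=> c0 hv v0.
have hneg : forall j : nat, v (- j%:Z) = 0.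
  elim=> [|j IH]; first by rewrite oppr0.
  have := hv (- j.+1%:Z); rewrite intS opprD addrAC subrr add0r IH.
  by move/esym/eqP; rewrite mulf_eq0 (negbTE c0) /= => /eqP.
case=> j; first by rewrite (@geo v c hv) v0 mulr0.
by rewrite NegzE hneg.
Qed.

Lemma lemA (c : L) m u : c != 0 -> (m%:R != 0 :> L) -> is_period u m ->
  (forall n, Tsh c (Tsh c u) n = 0) -> forall n, Tsh c u n = 0.
Proof.
move=> c0 m0 hp hT.
set v := Tsh c u.
have hv : forall n, v (n + 1) = c * v n.
  by move=> n; apply/eqP; rewrite -subr_eq0; apply/eqP; apply: hT.
have gv := @geo v c hv.
set d := v 0.
have hu : forall i : nat, c * u i%:Z = c ^+ i.+1 * u 0 + i%:R * c ^+ i * d.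
  elim=> [|i IH]; first by rewrite expr1 mul0r mul0r addr0.
  have e : u (i.+1)%:Z = v i%:Z + c * u i%:Z.
    by rewrite /v /Tsh intS addrC subrK.
  rewrite e mulrDr IH gv -/d !exprS mulrS; ring.
have pv := @Tsh_period c u m hp 0; rewrite add0r -/v in pv.
have pu := hp 0; rewrite add0r in pu.
rewrite gv -/d in pv.
have d0 : d = 0.
  have [//|dn0] := eqVneq d 0; exfalso.
  have cm : c ^+ m = 1.
    apply/eqP; rewrite -subr_eq0; apply/eqP.
    apply: (mulIf dn0); by rewrite mul0r mulrBl pv mul1r subrr.
  have e := hu m; rewrite pu exprS cm mulr1 mulr1 in e.
  have : m%:R * d = 0 by apply: (@addrI _ (c * u 0)); rewrite addr0 -e.
  by move/eqP; rewrite mulf_eq0 (negbTE m0) (negbTE dn0).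
exact: zero_all c0 hv d0.
Qed.

Lemma iter_zero (c : L) m s j : c != 0 -> (m%:R != 0 :> L) -> is_period s m ->
  (forall n, iter j.+1 (Tsh c) s n = 0) -> forall n, Tsh c s n = 0.
Proof.
move=> c0 m0 hp; elim: j => [|j IH] //= h.
apply: IH => n.
exact: (lemA c m (iter j (Tsh c) s) c0 m0 (@iter_period c s m j hp) h n).
Qed.

End Aux.


Lemma prod_mulx (L : fieldType) (x : L) (M : seq L) :
  \prod_(y <- M) (x * y) = x ^+ size M * \prod_(y <- M) y.
Proof.
elim: M => [|y M IH]; first by rewrite !big_nil mulr1.
by rewrite !big_cons IH /= exprS; ring.
Qed.

Lemma pow_order (L : fieldType) (M : seq L) x :
  finite_mult_subgroup M -> x \in M -> x ^+ size M = 1.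
Proof.
case=> uM n0 one mulM invM xM.
have x0 : x != 0 by apply: contraNneq n0 => <-.
have pe : perm_eq M [seq x * y | y <- M].
  apply: uniq_perm => //.
    by rewrite map_inj_in_uniq // => y z _ _; apply: mulfI.
  move=> y; apply/idP/mapP.
    move=> yM; exists (x^-1 * y); first by apply: mulM => //; apply: invM.
    by rewrite mulVKf.
  by case=> z zM ->; apply: mulM.
have := perm_big _ pe (F := fun y => y) (P := xpredT) (op := *%R) (x := 1).
rewrite big_map prod_mulx => e.
have P0 : \prod_(y <- M) y != 0.
  rewrite prodf_seq_neq0; apply/allP => y yM /=.
  by apply: contraNneq n0 => <-.
apply: (mulIf P0); by rewrite mul1r -e.
Qed.

Lemma order_nz (L : fieldType) (p : nat) (M : seq L) :
  p \in [char L] -> finite_mult_subgroup M -> (size M)%:R != 0 :> L.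
Proof.
move=> pch hM; apply/negP => /eqP m0.
have hp := pcharf_prime pch.
have := dvdn_pcharf pch (size M); rewrite m0 eqxx => /dvdnP [m' em].
have hM' := hM; case: hM' => uM n0 one mulM invM.
have mpos : (0 < size M)%N by case: (M) one.
have m'pos : (0 < m')%N by move: mpos; rewrite em muln_gt0 => /andP[].
have roots : all (root ('X^m' - 1)) M.
  apply/allP => x xM; rewrite /root !hornerE.
  have y1 := @pow_order _ M x hM xM; rewrite em exprM in y1.
  have : Frobenius_aut pch (x ^+ m' - 1) = 0.
    rewrite Frobenius_autB_comm; last exact: commr1.
    by rewrite !Frobenius_autE y1 expr1n subrr.
  by rewrite Frobenius_autE => /eqP; rewrite expf_eq0 => /andP[_ ->].
have nz : ('X^m' - 1 : {poly L}) != 0.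
  apply/eqP => /(congr1 (fun q : {poly L} => size q)).
  by rewrite size_Xn_sub_1 // size_poly0.
have := max_poly_roots nz roots uM.
rewrite size_Xn_sub_1 // ltnS em.
have p1 := prime_gt1 hp.
move=> h; nia.
Qed.


Theorem mainTheorem6 (F : finFieldType) (a : F) (k : nat)
    (L : fieldType) (iota : {rmorphism F -> L}) (M : seq L) :
  a != 0 -> (0 < k)%N ->
  let f := map_poly iota (('X - a%:P) ^+ k) in
  f_subgroup f M ->
  (forall x, x \in M <-> in_cyclic_gen (iota a) x) /\
  standard_subgroup f M /\
  (forall s : int -> L, is_f_seq f s -> presents s M ->
     forall n : int, s (n + 1) = iota a * s n).
Proof.
move=> a0 kpos f hf; have [hM [s0 [fs0 ps0]]] := hf.
set b := iota a.
have b0 : b != 0 by rewrite fmorph_eq0.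
have [p _ pch] := finPcharP F.
have pchL := rmorph_pchar iota pch.
have m0 := order_nz L p M pchL hM.
have fE : f = ('X - b%:P) ^+ k.
  by rewrite /f rmorphXn rmorphB /= map_polyX map_polyC.
have key : forall s, is_f_seq f s -> presents s M -> forall n, s (n + 1) = b * s n.
  move=> s fs [per _ _] n.
  have hk : forall n, iter (k.-1).+1 (Tsh L b) s n = 0.
    by move=> n'; rewrite prednK // -(psa_pow L b) -fE; exact: fs n'.
  have := iter_zero L b (size M) s (k.-1) b0 m0 per hk n.
  by rewrite /Tsh => /eqP; rewrite subr_eq0 => /eqP.
split; last first.
  split; last exact: key.
  split => // s fs ps; exists b; exact: key.
have hv := key s0 fs0 ps0.
have gv := @geo L s0 b hv.
case: ps0 => per _ memM.
have perq : forall q i : nat, s0 (i%:Z + (q * size M)%N%:Z) = s0 i%:Z.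
  elim=> [|q IH] i; first by rewrite mul0n addr0.
  by rewrite mulSn PoszD (addrC (size M)%:Z) addrA per IH.
have perm : forall t : nat, s0 t%:Z = s0 (t %% size M)%N%:Z.
  by move=> t; rewrite {1}(divn_eq t (size M)) PoszD addrC perq.
case: hM => uM n0 one mulM invM.
have mpos : (0 < size M)%N by case: (M) one.
have s00 : s0 0 \in M.
  rewrite memM; apply/mapP; exists 0%N => //.
  by rewrite mem_iota.
have s0n0 : s0 0 != 0 by apply: contraNneq n0 => <-.
have := one; rewrite memM => /mapP [j]; rewrite mem_iota add0n => /andP [_ jm] e1.
rewrite gv in e1.
have bm : b ^+ size M = 1.
  have e := per 0; rewrite add0r (gv (size M)) in e.
  by apply: (mulIf s0n0); rewrite mul1r e.
have s0E : s0 0 = b ^+ (size M - j).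
  rewrite -[RHS]mulr1 e1 mulrA -exprD subnK; last exact: ltnW.
  by rewrite bm mul1r.
move=> x; split.
  rewrite memM => /mapP [i _ ->]; rewrite gv s0E -exprD.
  by exists (i + (size M - j))%N.
case=> n ->.
rewrite -[b ^+ n]mulr1 e1 mulrA -exprD -gv perm memM.
apply/mapP; exists ((n + j) %% size M)%N => //.
by rewrite mem_iota add0n ltn_pmod.
Qed.
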